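(* For positive integers $m$ and $n$, \begin{align*} \overline{{m+n \brack n}}_{q,t} &= \overline{{m+n -1\brack n-1}}_{q,t} +q^n \overline{{m+n-1 \brack n}}_{q,t} + tq^n \overline{ {m+n-2 \brack n-1}}_{q,t},\\ \overline{{m+n \brack n}}_{q,t} &= \overline{{m+n -1\brack n}}_{q,t} +q^m \overline{{m+n-1 \brack n-1}}_{q,t} + tq^m \overline{{m+n-2 \brack n-1}}_{q,t}. \end{align*}
   Context: An overpartition is a partition in which the last occurrence of each distinct part size may be overlined; its weight $|\lambda|$ is the sum of its parts. For integers $0\le b\le a$, $\overline{{a \brack b}}_{q,t}=\sum_{\lambda} t^{\#_o(\lambda)} q^{|\lambda|}$, the sum over all overpartitions $\lambda$ with largest part at most $a-b$ and at most $b$ parts, $\#_o(\lambda)$ being the number of overlined parts. *)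

(* Defs.v *)
From mathcomp Require Import all_boot all_order all_algebra.
Set Implicit Arguments. Unset Strict Implicit. Unset Printing Implicit Defensive.
Import GRing.Theory.
Local Open Scope ring_scope.

(* An overpartition is represented as a sequence of (part, overlined?) pairs,
   listed in nonincreasing order of parts.  Parts are positive; an entry may
   be overlined only if it is the last occurrence of its part size (i.e. the
   next entry, if any, has a different (smaller) part). *)
Fixpoint overline_ok (s : seq (nat * bool)) : bool :=
  match s with
  | x :: ((y :: _) as r) => (x.2 ==> (y.1 != x.1)) && overline_ok r
  | _ => true
  end.

Definition is_overpartition (s : seq (nat * bool)) : bool :=
  [&& all (fun p => 0 < p.1)%N s,
      sorted (fun x y => y.1 <= x.1)%N s & overline_ok s].

Definition ov_weight (s : seq (nat * bool)) : nat := sumn (map fst s).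
Definition ov_noverlined (s : seq (nat * bool)) : nat := count snd s.

Definition ov_seq N j (s : j.-tuple ('I_N.+1 * bool)) : seq (nat * bool) :=
  [seq (nat_of_ord x.1, x.2) | x <- s].

(* overline{[a ; b]}_{q,t} : sum over overpartitions with largest part at most
   a - b and at most b parts (j = number of parts, j <= b), of
   t^(#overlined) q^(weight).  Intended for b <= a. *)
Definition ovbinom (R : comRingType) (q t : R) (a b : nat) : R :=
  \sum_(j < b.+1)
    \sum_(s : j.-tuple ('I_(a - b).+1 * bool) | is_overpartition (ov_seq s))
      t ^+ ov_noverlined (ov_seq s) * q ^+ ov_weight (ov_seq s).

(* Main.v *)
Require Import Defs.
From mathcomp Require Import all_boot all_order all_algebra.
From mathcomp Require Import ring zify.
Import GRing.Theory.
Local Open Scope ring_scope.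

Fixpoint ovl (N b : nat) : seq (seq (nat * bool)) :=
  match N with
  | 0 => [:: [::]]
  | N'.+1 => (fix g b := match b with
               | 0 => [:: [::]]
               | b'.+1 => ovl N' b ++ map (cons (N, false)) (g b')
                            ++ map (cons (N, true)) (ovl N' b')
               end) b
  end.

Lemma ovlS N b : ovl N.+1 b.+1 = ovl N b.+1 ++ map (cons (N.+1, false)) (ovl N.+1 b)
                            ++ map (cons (N.+1, true)) (ovl N b).
Proof. by []. Qed.
Lemma ovl0 b : ovl 0 b = [:: [::]]. Proof. by []. Qed.
Lemma ovlN0 N : ovl N 0 = [:: [::]]. Proof. by case: N. Qed.

Definition okb (N b : nat) (x : seq (nat * bool)) :=
  [&& is_overpartition x, (size x <= b)%N & all (fun p => p.1 <= N)%N x].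

Lemma is_ov_cons p o r : is_overpartition ((p, o) :: r) =
  [&& (0 < p)%N, is_overpartition r &
      (if r is y :: _ then (y.1 <= p)%N && (o ==> (y.1 != p)) else true)].
Proof.
rewrite /is_overpartition; case: r => [|y r] /=; first by rewrite andbT.
case: y => y1 y2 /=.
set A := all _ r; set B := path _ _ r; set C := match r with [::] => _ | _ => _ end.
by case: (0 < p)%N; case: (0 < y1)%N; case: A; case: B; case: C; case: (y1 <= p)%N; case: o; case: (y1 != p).
Qed.

Lemma is_ov_max y r : is_overpartition (y :: r) -> all (fun z => z.1 <= y.1)%N r.
Proof.
case/and3P => _ /= H _.
have tr : transitive (fun x y : nat * bool => y.1 <= x.1)%N.
  by move=> a c d /= H1 H2; exact: leq_trans H2 H1.
exact: (order_path_min tr H).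
Qed.
Arguments is_ov_max {y r}.

Lemma mem_cons_map (c : nat * bool) s y r :
  (y :: r \in map (cons c) s) = (y == c) && (r \in s).
Proof.
apply/mapP/andP => [[z zs [-> ->]]|[/eqP -> rs]]; first by rewrite eqxx.
by exists r.
Qed.

Lemma all_le_trans (N M : nat) (r : seq (nat * bool)) :
  (M <= N)%N -> all (fun z => z.1 <= M)%N r -> all (fun z => z.1 <= N)%N r.
Proof. move=> MN /allP H; apply/allP => z /H zM; exact: leq_trans zM MN. Qed.
Arguments all_le_trans {N M r}.

Lemma mem_ovl N b x : (x \in ovl N b) = okb N b x.
Proof.
elim: N b x => [|N IHN] b x.
  rewrite ovl0 inE /okb; case: x => [|[p o] r] //=.
  rewrite is_ov_cons; case: p => [|p]; rewrite /= ?andbF //.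
elim: b x => [|b IHb] x.
  by rewrite ovlN0 inE /okb; case: x => [|[p o] r] //=; rewrite !andbF.
rewrite ovlS !mem_cat IHN.
case: x => [|[p o] r]; first by rewrite /okb.
rewrite !mem_cons_map IHb IHN /okb /= !xpair_eqE.
apply/idP/idP.
  case/or3P.
  - case/and4P => Hx Hs Hp Ha; rewrite Hx Hs (leq_trans Hp) //=.
    exact: all_le_trans Ha.
  - case/and4P => /andP [/eqP -> /eqP ->] Hr Hs Ha.
    rewrite ltnS Hs leqnn Ha is_ov_cons Hr /= andbT.
    by case: r Hr Hs Ha => [|y r] //= _ _ /andP [-> _].
  - case/and4P => /andP [/eqP -> /eqP ->] Hr Hs Ha.
    rewrite ltnS Hs leqnn (all_le_trans (leqnSn N) Ha) // is_ov_cons Hr /= andbT.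
    case: r Hr Hs Ha => [|y r] //= _ _ /andP [H _].
    by rewrite (leq_trans H) //= neq_ltn ltnS H.
case/and4P => Hx Hs Hp Ha.
have Hr := is_ov_max Hx.
move: (Hx); rewrite {1}is_ov_cons => /and3P [_ Hr' Hh].
move: Hp; rewrite leq_eqVlt => /orP [/eqP Ep|Hp].
  rewrite Ep eqxx Hr' Ha /= andbT.
  case: o Hx Hr Hh => Hx Hr Hh; apply/or3P; [constructor 3|constructor 2] => //=.
  rewrite -ltnS Hs /=.
  case: r Hx Hr Hr' Hs Ha Hh => [|y r] //= Hx Hr Hr' Hs Ha /andP [H1 H2].
  have H3 : (y.1 <= N)%N by rewrite -ltnS ltn_neqAle -Ep H2 H1.
  rewrite H3 /=; exact: all_le_trans H3 (is_ov_max Hr').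
apply/or3P; constructor 1.
rewrite Hx Hs -ltnS Hp /=; apply: all_le_trans Hr; by rewrite -ltnS.
Qed.

Lemma uniq_ovl N b : uniq (ovl N b).
Proof.
elim: N b => [|N IHN] b //.
elim: b => [|b IHb] //.
have ci : forall c : nat * bool, injective (cons c) by move=> c x y [].
rewrite ovlS !cat_uniq !map_inj_uniq ?IHN ?IHb //= andbT.
apply/andP; split.
  apply/hasPn => x; rewrite mem_cat => /orP [] /mapP [r _ ->];
    by rewrite mem_ovl /okb /= ltnn !andbF.
by apply/hasPn => x /mapP [r _ ->]; apply/negP => /mapP [r' _ []].
Qed.

Definition W (R : comRingType) (q t : R) x := t ^+ ov_noverlined x * q ^+ ov_weight x.
Arguments W {R}.
Definition Gs (R : comRingType) (q t : R) N b := \sum_(x <- ovl N b) W q t x.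
Arguments Gs {R}.

Lemma Gs_rec (R : comRingType) (q t : R) N b :
  Gs q t N.+1 b.+1 = Gs q t N b.+1 + q ^+ N.+1 * Gs q t N.+1 b + t * q ^+ N.+1 * Gs q t N b.
Proof.
rewrite /Gs ovlS !big_cat !big_map /= !mulr_sumr -addrA; congr (_ + (_ + _)).
  by apply: eq_bigr => x _; rewrite /W /ov_noverlined /ov_weight /= add0n exprD mulrCA.
apply: eq_bigr => x _; rewrite /W /ov_noverlined /ov_weight /= add1n exprS exprD.
by rewrite !mulrA [t * t ^+ _ * _]mulrAC; congr (_ * _); rewrite -!mulrA mulrCA.
Qed.

Lemma Gs0 (R : comRingType) (q t : R) b : Gs q t 0 b = 1.
Proof. by rewrite /Gs ovl0 big_seq1 /W /ov_noverlined /ov_weight /= !expr0 mulr1. Qed.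
Lemma GsN0 (R : comRingType) (q t : R) N : Gs q t N 0 = 1.
Proof. by rewrite /Gs ovlN0 big_seq1 /W /ov_noverlined /ov_weight /= !expr0 mulr1. Qed.

Lemma ovbinomE (R : comRingType) (q t : R) a b : ovbinom q t a b = Gs q t (a - b) b.
Proof.
rewrite /ovbinom /Gs; set N := (a - b)%N.
transitivity (\sum_(j < b.+1) \sum_(x <- ovl N b | size x == j) W q t x).
  apply: eq_bigr => j _.
  rewrite -big_filter.
  rewrite (eq_bigr (fun s => W q t (ov_seq s))) //.
  rewrite -(big_map (@ov_seq N j) xpredT (W q t)) /=.
  rewrite -[RHS]big_filter; apply: perm_big; apply: uniq_perm.
  - rewrite map_inj_uniq ?filter_uniq ?index_enum_uniq //.
    move=> s1 s2 /= E; apply: val_inj; apply: (inj_map _ E).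
    by move=> [a1 b1] [a2 b2] /= [/ord_inj -> ->].
  - by rewrite filter_uniq // uniq_ovl.
  move=> x; apply/idP/idP.
    case/mapP => s; rewrite mem_filter => /andP [Ps _] ->.
    rewrite mem_filter mem_ovl /okb Ps /ov_seq size_map size_tuple eqxx /= -ltnS ltn_ord /=.
    by apply/allP => z /mapP [y _ ->] /=; rewrite -ltnS ltn_ord.
  rewrite mem_filter mem_ovl => /andP [/eqP Hj /and3P [Hx Hs Ha]].
  have Hsz : size (map (fun p : nat * bool => ((inord p.1 : 'I_N.+1), p.2)) x) == j.
    by rewrite size_map Hj.
  have E : ov_seq (Tuple Hsz) = x.
    rewrite /ov_seq /= -map_comp -[RHS]map_id; apply/eq_in_map => z zx /=.
    rewrite inordK; first by case: z {zx}.
    by rewrite ltnS; exact: (allP Ha).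
  apply/mapP; exists (Tuple Hsz); last by rewrite E.
  by rewrite mem_filter E Hx mem_index_enum.
rewrite (exchange_big_dep xpredT) //=.
apply: eq_big_seq => x; rewrite mem_ovl => /and3P [_ Hs _].
have Hs' : (size x < b.+1)%N by rewrite ltnS.
rewrite (big_pred1 (Ordinal Hs')) //=.
Qed.

Lemma from_eq (R : zmodType) (A B C D : R) : A - B = C - D -> C = D -> A = B.
Proof. by move=> E CD; apply/eqP; rewrite -subr_eq0 E CD subrr. Qed.
Arguments from_eq {R A B C D}.
Lemma from_eqk (R : comRingType) (k A B C D : R) : A - B = k * (C - D) -> C = D -> A = B.
Proof. by move=> E CD; apply/eqP; rewrite -subr_eq0 E CD subrr mulr0. Qed.
Arguments from_eqk {R} k {A B C D}.

Lemma alg (R : comRingType) (q t : R) (G : nat -> nat -> R) :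
  (forall b, G 0%N b = 1) -> (forall N, G N 0%N = 1) ->
  (forall N b, G N.+1 b.+1 = G N b.+1 + q ^+ N.+1 * G N.+1 b + t * q ^+ N.+1 * G N b) ->
  forall m n, G m.+1 n.+1 = G m.+1 n + q ^+ n.+1 * G m n.+1 + t * q ^+ n.+1 * G m n.
Proof.
move=> H0 H1 HR.
have L1' : forall n, G 1%N n.+1 = 1 + q * G 1%N n + t * q.
  by move=> n; rewrite HR !H0 expr1 mulr1.
have L2' : forall m, G m.+1 1%N = G m 1%N + q ^+ m.+1 + t * q ^+ m.+1.
  by move=> m; rewrite HR !H1 !mulr1.
have L1 : forall n, G 1%N n.+1 = G 1%N n + q ^+ n.+1 * G 0%N n.+1 + t * q ^+ n.+1 * G 0%N n.
  elim=> [|n IH]; first by rewrite HR !H0 !H1.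
  rewrite !H0 !mulr1 in IH *; rewrite !L1' in IH *.
  apply: (from_eqk q _ IH); rewrite !exprS; ring.
have L2 : forall m, G m.+1 1%N = G m.+1 0%N + q ^+ 1 * G m 1%N + t * q ^+ 1 * G m 0%N.
  elim=> [|m IH]; first by rewrite HR !H0 !H1.
  rewrite !H1 !mulr1 in IH *; rewrite !L2' in IH *.
  apply: (from_eq _ IH); rewrite !exprS; ring.
elim=> [|m IHm] n; first exact: L1.
elim: n => [|n IHn]; first exact: L2.
have key : G m.+2 n.+2 - (G m.+2 n.+1 + q ^+ n.+2 * G m.+1 n.+2 + t * q ^+ n.+2 * G m.+1 n.+1)
  = (G m.+1 n.+2 - (G m.+1 n.+1 + q ^+ n.+2 * G m n.+2 + t * q ^+ n.+2 * G m n.+1))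
  + q ^+ m.+2 * (G m.+2 n.+1 - (G m.+2 n + q ^+ n.+1 * G m.+1 n.+1 + t * q ^+ n.+1 * G m.+1 n))
  + t * q ^+ m.+2 * (G m.+1 n.+1 - (G m.+1 n + q ^+ n.+1 * G m n.+1 + t * q ^+ n.+1 * G m n)).
  rewrite (HR m.+1 n.+1) (HR m.+1 n) (HR m n.+1) (HR m n) !exprS; ring.
move: key (IHm n.+1) (IHm n) IHn.
move=> key /eqP; rewrite -subr_eq0 => /eqP E1.
move=> /eqP; rewrite -subr_eq0 => /eqP E2.
move=> /eqP; rewrite -subr_eq0 => /eqP E3.
rewrite E1 E2 E3 !mulr0 !addr0 in key.
by apply/eqP; rewrite -subr_eq0 key.
Qed.

Theorem theorem2p3 (R : comRingType) (q t : R) (m n : nat) :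
  (0 < m)%N -> (0 < n)%N ->
  ovbinom q t (m + n) n =
    ovbinom q t (m + n - 1) (n - 1) + q ^+ n * ovbinom q t (m + n - 1) n
    + t * q ^+ n * ovbinom q t (m + n - 2) (n - 1)
  /\
  ovbinom q t (m + n) n =
    ovbinom q t (m + n - 1) n + q ^+ m * ovbinom q t (m + n - 1) (n - 1)
    + t * q ^+ m * ovbinom q t (m + n - 2) (n - 1).
Proof.
case: m => // m _; case: n => // n _.
rewrite !ovbinomE.
have -> : (m.+1 + n.+1 - n.+1 = m.+1)%N by lia.
have -> : (m.+1 + n.+1 - 1 - (n.+1 - 1) = m.+1)%N by lia.
have -> : (m.+1 + n.+1 - 1 - n.+1 = m)%N by lia.
have -> : (m.+1 + n.+1 - 2 - (n.+1 - 1) = m)%N by lia.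
have -> : (n.+1 - 1 = n)%N by lia.
split.
  apply: (@alg R q t (Gs q t)) => [b|N|N b]; [exact: Gs0|exact: GsN0|exact: Gs_rec].
exact: Gs_rec.
Qed.
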